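(* Let $\{Q_j\}_{j=1}^{d^2}$ be an NQPR in dimension $d$ and let $U$ be a unitary on $\mathbb{C}^d$. Then all entries of the matrix $U^Q_{jk}=\operatorname{tr}(Q_jUQ_kU^\dagger)/d$ are nonnegative if and only if $U$ belongs to the symmetry group of $\{Q_j\}$.
   Context: An NQPR in dimension $d$ is a family $\{Q_j\}_{j=1}^{d^2}$ of Hermitian operators on $\mathbb{C}^d$ with $\operatorname{tr}(Q_j)=1$ and $\operatorname{tr}(Q_jQ_k)=d\,\delta_{jk}$. Its symmetry group is the group of all unitaries $U$ on $\mathbb{C}^d$ such that $\{UQ_jU^\dagger\}_j=\{Q_j\}_j$ as sets. *)

(* Defs.v *)
From HB Require Import structures.
From mathcomp Require Import all_boot all_order all_algebra.
From mathcomp Require Import complex.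
From mathcomp Require Import reals.
Set Implicit Arguments. Unset Strict Implicit. Unset Printing Implicit Defensive.
Import Order.TTheory GRing.Theory Num.Theory.
Local Open Scope ring_scope.

Definition adjmx (C : numClosedFieldType) (n : nat) (A : 'M[C]_n) : 'M[C]_n :=
  (map_mx Num.conj A)^T.

Definition hermitian (C : numClosedFieldType) (n : nat) (A : 'M[C]_n) : Prop :=
  adjmx A = A.

Definition unitary (C : numClosedFieldType) (n : nat) (U : 'M[C]_n) : Prop :=
  U *m adjmx U = 1%:M.

Definition NQPR (C : numClosedFieldType) (d : nat) (Q : 'I_(d ^ 2) -> 'M[C]_d) : Prop :=
  (forall j, hermitian (Q j)) /\
  (forall j, \tr (Q j) = 1) /\
  (forall j k, \tr (Q j *m Q k) = if j == k then d%:R else 0).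

(* U is in the symmetry group of Q: {U Q_j U^dagger}_j = {Q_j}_j as sets. *)
Definition in_symmetry_group (C : numClosedFieldType) (d : nat)
  (Q : 'I_(d ^ 2) -> 'M[C]_d) (U : 'M[C]_d) : Prop :=
  unitary U /\
  (forall j, exists k, U *m Q j *m adjmx U = Q k) /\
  (forall k, exists j, U *m Q j *m adjmx U = Q k).

Definition UQ (C : numClosedFieldType) (d : nat)
  (Q : 'I_(d ^ 2) -> 'M[C]_d) (U : 'M[C]_d) : 'M[C]_(d ^ 2) :=
  \matrix_(j, k) (\tr (Q j *m U *m Q k *m adjmx U) / d%:R).

(* Main.v *)
Set Warnings "-notation-overridden,-ambiguous-paths,-parsing,-coercions".
Require Import Defs.
From HB Require Import structures.
From mathcomp Require Import all_boot all_order all_algebra.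
From mathcomp Require Import complex.
From mathcomp Require Import reals.
Import Order.TTheory GRing.Theory Num.Theory.
Local Open Scope ring_scope.
Set Warnings "-notation-overridden,-ambiguous-paths".

Set Implicit Arguments. Unset Strict Implicit.
Section Helpers.
Variable C : numClosedFieldType.

Lemma trE n (X Y : 'M[C]_n) :
  \tr (X *m Y) = \sum_a \sum_b X a b * Y b a.
Proof. by rewrite /mxtrace; apply: eq_bigr => a _; rewrite mxE. Qed.

Lemma sum_mxvec n (F : 'I_(n * n) -> C) :
  \sum_p F p = \sum_a \sum_b F (mxvec_index a b).
Proof.
rewrite (reindex (uncurry (@mxvec_index n n))) /=; last exact: curry_mxvec_bij.
by rewrite pair_big /=; apply: eq_bigr => -[a b].
Qed.

Lemma herm_entry n (A : 'M[C]_n) : Defs.hermitian A -> forall a b, Num.conj (A a b) = A b a.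
Proof. by move=> hA a b; rewrite /Defs.hermitian in hA; have := congr1 (fun M : 'M[C]_n => M b a) hA; rewrite /adjmx !mxE. Qed.

Lemma unitaryC n (U : 'M[C]_n) : Defs.unitary U -> adjmx U *m U = 1%:M.
Proof. by move=> hU; apply: mulmx1C. Qed.

Lemma tr_conj n (U A : 'M[C]_n) : Defs.unitary U ->
  \tr (U *m A *m adjmx U) = \tr A.
Proof.
move=> hU; rewrite mxtrace_mulC mulmxA unitaryC // mul1mx //.
Qed.

Lemma tr_conj2 n (U A B : 'M[C]_n) : Defs.unitary U ->
  \tr ((U *m A *m adjmx U) *m (U *m B *m adjmx U)) = \tr (A *m B).
Proof.
move=> hU.
have -> : (U *m A *m adjmx U) *m (U *m B *m adjmx U) = U *m (A *m B) *m adjmx U.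
  by rewrite !mulmxA -(mulmxA (U *m A) (adjmx U) U) unitaryC // mulmx1.
exact: tr_conj.
Qed.


Definition Bmx d (Q : 'I_(d ^ 2) -> 'M[C]_d) : 'M[C]_(d * d) :=
  \matrix_(j, p) mxvec (Q j) 0 p.
Definition Bt d (Q : 'I_(d ^ 2) -> 'M[C]_d) : 'M[C]_(d * d) :=
  (map_mx Num.conj (Bmx Q))^T.

Lemma gram d (Q : 'I_(d ^ 2) -> 'M[C]_d) : NQPR Q ->
  Bmx Q *m Bt Q = d%:R%:M.
Proof.
move=> [hH [h1 hO]]; apply/matrixP => j k; rewrite !mxE.
rewrite sum_mxvec.
have -> : \sum_a \sum_b (Bmx Q j (mxvec_index a b) * Bt Q (mxvec_index a b) k)
  = \tr (Q j *m Q k).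
  rewrite trE; apply: eq_bigr => a _; apply: eq_bigr => b _.
  by rewrite /Bt /Bmx !mxE !mxvecE herm_entry.
by rewrite hO; case: (j == k).
Qed.

Lemma gramC d (Q : 'I_(d ^ 2) -> 'M[C]_d) : NQPR Q -> (d != 0)%N ->
  Bt Q *m Bmx Q = d%:R%:M.
Proof.
move=> hQ hd.
have hd' : (d%:R : C) != 0 by rewrite pnatr_eq0.
have h : Bmx Q *m ((d%:R)^-1 *: Bt Q) = 1%:M.
  by rewrite -scalemxAr gram // scale_scalar_mx mulVf.
have := mulmx1C h; rewrite -scalemxAl => h2.
by rewrite -[Bt Q *m Bmx Q]scale1r -[X in X *: _](mulfV hd') -scalerA h2 scale_scalar_mx mulr1.
Qed.

Lemma expand d (Q : 'I_(d ^ 2) -> 'M[C]_d) (M : 'M[C]_d) : NQPR Q -> (d != 0)%N ->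
  \sum_j (\tr (Q j *m M) / d%:R) *: Q j = M.
Proof.
move=> hQ hd.
have hd' : (d%:R : C) != 0 by rewrite pnatr_eq0.
have E : mxvec M *m Bt Q *m Bmx Q = d%:R *: mxvec M.
  by rewrite -mulmxA gramC // mul_mx_scalar.
apply/matrixP => a b; rewrite summxE.
have := congr1 (fun v : 'rV[C]_(d * d) => v 0 (mxvec_index a b)) E.
rewrite /= [in RHS]mxE mxvecE mxE => E2.
apply: (mulfI hd'); rewrite -E2 mulr_sumr; apply: eq_bigr => j _.
rewrite !mxE mxvecE mulrA; congr (_ * _).
rewrite mulrCA mulfV // mulr1 mxtrace_mulC trE sum_mxvec.
apply: eq_bigr => x _; apply: eq_bigr => y _.
by rewrite /Bt /Bmx !mxE !mxvecE herm_entry //; case: hQ.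
Qed.


Lemma onehot n (c : 'I_n -> C) : (forall j, 0 <= c j) -> \sum_j c j = 1 ->
  \sum_j c j * c j = 1 -> exists m, c m = 1 /\ forall j, j != m -> c j = 0.
Proof.
move=> hp hs hs2.
have le1 j : c j <= 1.
  by rewrite -hs (bigD1 j) //= lerDl sumr_ge0.
have h0 : \sum_j (c j - c j * c j) = 0 by rewrite sumrB hs hs2 subrr.
have hz j : c j * (1 - c j) = 0.
  rewrite mulrBr mulr1; apply: (psumr_eq0P _ h0) => // i _.
  by rewrite -{1}(mulr1 (c i)) -mulrBr mulr_ge0 // subr_ge0.
case: (pickP (fun m => c m != 0)) => [m hm|hn]; last first.
  move: hs; rewrite big1 => [|j _]; last by have := hn j => /= /negbFE /eqP.
  by move/eqP; rewrite eq_sym oner_eq0.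
have cm1 : c m = 1.
  by move: (hz m) => /eqP; rewrite mulf_eq0 (negbTE hm) /= subr_eq0 => /eqP.
exists m; split => // j hj.
have : \sum_(i | i != m) c i = 0.
  by move: hs; rewrite (bigD1 m) //= cm1 -[X in _ = X](addr0 1) => /addrI.
by move/psumr_eq0P; apply => // i _.
Qed.

End Helpers.

Lemma dne0 d (k : 'I_(d ^ 2)) : (d != 0)%N.
Proof. by apply/eqP => d0; move: k; rewrite d0 => -[]. Qed.

Theorem theorem5 (R : realType) (d : nat) (Q : 'I_(d ^ 2) -> 'M[R[i]]_d)
  (U : 'M[R[i]]_d) :
  NQPR Q -> unitary U ->
  ((forall j k, 0 <= UQ Q U j k) <-> in_symmetry_group Q U).
Proof.
move=> hQ hU; have [hH [h1 hO]] := hQ.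
have UQE j k : UQ Q U j k = \tr (Q j *m (U *m Q k *m adjmx U)) / d%:R.
  by rewrite /UQ mxE !mulmxA.
split; last first.
  move=> [_ [hs _]] j k; case: (hs k) => m hm.
  rewrite UQE hm hO; case: (j == m); last by rewrite mul0r.
  by rewrite divr_ge0 // ler0n.
move=> hpos.
have key k : exists m, U *m Q k *m adjmx U = Q m.
  have hd := dne0 k.
  have hd' : (d%:R : R[i]) != 0 by rewrite pnatr_eq0.
  set V := U *m Q k *m adjmx U.
  pose c j := UQ Q U j k.
  have hexp : \sum_j c j *: Q j = V.
    by rewrite -[RHS](expand V hQ hd); apply: eq_bigr => j _; rewrite /c UQE.
  have hs : \sum_j c j = 1.
    have := congr1 mxtrace hexp; rewrite raddf_sum /V tr_conj // h1 => <-.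
    by apply: eq_bigr => j _; rewrite /= mxtraceZ h1 mulr1.
  have hs2 : \sum_j c j * c j = 1.
    have := congr1 (fun M => \tr (M *m V)) hexp.
    rewrite /= /V tr_conj2 // hO eqxx mulmx_suml raddf_sum /= => E.
    apply: (mulIf hd'); rewrite mul1r -{2}E mulr_suml; apply: eq_bigr => j _.
    by rewrite -scalemxAl mxtraceZ /c UQE -/V -[LHS]mulrA divfK.
  have [m [cm1 cm0]] := onehot (fun j => hpos j k) hs hs2.
  exists m; rewrite -/V -hexp (bigD1 m) //= [c m]cm1 scale1r big1 ?addr0 // => j hj.
  by rewrite [c j]cm0 // scale0r.
split => //; split => //.
have [s hs] := fin_all_exists key.
have sinj : injective s.
  move=> k l hkl; have hd := dne0 k.
  have := tr_conj2 (Q k) (Q l) hU; rewrite !hs hkl !hO eqxx.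
  by case: eqP => // _ /eqP; rewrite pnatr_eq0 (negbTE hd).
have [g _ hg] := injF_bij sinj.
by move=> k; exists (g k); rewrite hs hg.
Qed.
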